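(* Every classically perfect positive definite matrix $Q\in\mathcal{S}^n_{>0}$ is arithmetically equivalent to a perfect copositive matrix: there exists $U\in\mathrm{GL}_n(\mathbb{Z})$ such that $U^\top QU$ is perfect copositive.
   Context: $\mathcal{S}^n$: real symmetric $n\times n$ matrices, $\mathcal{S}^n_{>0}$ the positive definite ones; $B[v]=v^\top Bv$. Classical notions: $\min Q=\min\{Q[v]: v\in\mathbb{Z}^n\setminus\{0\}\}$, $\operatorname{Min}Q=\{v\in\mathbb{Z}^n: Q[v]=\min Q\}$; a positive definite $Q$ is classically perfect if it is the unique $Q'\in\mathcal{S}^n$ with $Q'[v]=\min Q$ for all $v\in\operatorname{Min}Q$. Two symmetric matrices $Q_1,Q_2$ are arithmetically equivalent if $Q_2=U^\top Q_1U$ for some $U\in\mathrm{GL}_n(\mathbb{Z})$. Copositive notions: $\mathcal{COP}^n=\{B\in\mathcal{S}^n: B[x]\ge0\ \forall x\in\mathbb{R}^n_{\ge0}\}$; strictly copositive means lying in its interior; $\min_{\mathcal{COP}}B=\inf\{B[v]: v\in\mathbb{Z}^n_{\ge0}\setminus\{0\}\}$, $\operatorname{Min}_{\mathcal{COP}}B=\{v\in\mathbb{Z}^n_{\ge0}: B[v]=\min_{\mathcal{COP}}B\}$; a strictly copositive $P$ is perfect copositive if it is the unique $Q\in\mathcal{S}^n$ with $Q[v]=\min_{\mathcal{COP}}P$ for all $v\in\operatorname{Min}_{\mathcal{COP}}P$. *)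

(* Defs.v *)
From HB Require Import structures.
From mathcomp Require Import all_boot all_order all_algebra.
From mathcomp Require Import all_classical all_reals.
Set Implicit Arguments. Unset Strict Implicit. Unset Printing Implicit Defensive.
Import Order.TTheory GRing.Theory Num.Theory.
Local Open Scope ring_scope.
Local Open Scope classical_set_scope.

Section Defs.
Variables (R : realType) (n : nat).

Definition qf (B : 'M[R]_n) (v : 'cV[R]_n) : R := (v^T *m B *m v) 0 0.

Definition symmetric (B : 'M[R]_n) : Prop := B^T = B.

Definition zvec (z : 'cV[int]_n) : 'cV[R]_n := map_mx (fun k : int => k%:~R) z.
Definition nvec (z : 'cV[nat]_n) : 'cV[R]_n := map_mx (fun k : nat => k%:R) z.

Definition posdef (Q : 'M[R]_n) : Prop :=
  symmetric Q /\ forall x : 'cV[R]_n, x != 0 -> 0 < qf Q x.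

Definition minQ (Q : 'M[R]_n) : R :=
  inf [set qf Q (zvec z) | z in [set z : 'cV[int]_n | z != 0]].
Definition MinQ (Q : 'M[R]_n) : set 'cV[int]_n :=
  [set z | qf Q (zvec z) = minQ Q].

Definition classically_perfect (Q : 'M[R]_n) : Prop :=
  posdef Q /\
  forall Q' : 'M[R]_n, symmetric Q' ->
    (forall z, MinQ Q z -> qf Q' (zvec z) = minQ Q) -> Q' = Q.

(* copositive cone and its interior (in S^n, entrywise max-norm topology) *)
Definition copositive (B : 'M[R]_n) : Prop :=
  symmetric B /\ forall x : 'cV[R]_n, (forall i, 0 <= x i 0) -> 0 <= qf B x.

Definition strictly_copositive (B : 'M[R]_n) : Prop :=
  symmetric B /\
  exists2 eps : R, 0 < eps &
    forall C : 'M[R]_n, symmetric C ->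
      (forall i j, `|C i j - B i j| < eps) -> copositive C.

Definition minCOP (B : 'M[R]_n) : R :=
  inf [set qf B (nvec z) | z in [set z : 'cV[nat]_n | z != 0]].
Definition MinCOP (B : 'M[R]_n) : set 'cV[nat]_n :=
  [set z | qf B (nvec z) = minCOP B].

Definition perfect_copositive (P : 'M[R]_n) : Prop :=
  strictly_copositive P /\
  forall Q : 'M[R]_n, symmetric Q ->
    (forall z, MinCOP P z -> qf Q (nvec z) = minCOP P) -> Q = P.

Definition intmx (U : 'M[int]_n) : 'M[R]_n := map_mx (fun k : int => k%:~R) U.

End Defs.

(* Main.v *)
Require Import Defs.
From HB Require Import structures.
From mathcomp Require Import all_boot all_order all_algebra.
From mathcomp Require Import all_classical all_reals.
From mathcomp Require Import zify ring lra.
Import Order.TTheory GRing.Theory Num.Theory.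
Local Open Scope ring_scope.

Section QF.
Context {R : realType} {n : nat}.
Implicit Types (B Q : 'M[R]_n) (x y : 'cV[R]_n).

Definition bil B x y : R := (x^T *m B *m y) 0 0.

Lemma qf_bil B x : qf B x = bil B x x. Proof. by []. Qed.

Lemma bil_sum B x y : bil B x y = \sum_i \sum_j x i 0 * B i j * y j 0.
Proof.
rewrite /bil mxE exchange_big /=; apply: eq_bigr => j _.
rewrite mxE big_distrl /=; apply: eq_bigr => i _; by rewrite mxE.
Qed.



Lemma bilC B x y : Defs.symmetric B -> bil B x y = bil B y x.
Proof.
move=> sB; rewrite !bil_sum exchange_big /=; apply: eq_bigr => i _.
apply: eq_bigr => j _. rewrite -{1}sB mxE; ring.
Qed.

Lemma bilDl B x x' y : bil B (x + x') y = bil B x y + bil B x' y.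
Proof. by rewrite /bil linearD /= !mulmxDl mxE. Qed.
Lemma bilDr B x y y' : bil B x (y + y') = bil B x y + bil B x y'.
Proof. by rewrite /bil !mulmxDr mxE. Qed.
Lemma bilZl B a x y : bil B (a *: x) y = a * bil B x y.
Proof. by rewrite /bil linearZ /= -!scalemxAl mxE. Qed.
Lemma bilZr B a x y : bil B x (a *: y) = a * bil B x y.
Proof. by rewrite /bil -!scalemxAr mxE. Qed.
Lemma bil0l B y : bil B 0 y = 0.
Proof. by rewrite -(scale0r 0) bilZl mul0r. Qed.
Lemma bilDm B B' x y : bil (B + B') x y = bil B x y + bil B' x y.
Proof. by rewrite /bil mulmxDr mulmxDl mxE. Qed.
Lemma bilNm B x y : bil (- B) x y = - bil B x y.
Proof. by rewrite /bil mulmxN mulNmx mxE. Qed.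

Lemma qf_lin B a b x y : Defs.symmetric B ->
  qf B (a *: x + b *: y) = a ^+ 2 * qf B x + 2 * a * b * bil B x y + b ^+ 2 * qf B y.
Proof.
move=> sB; rewrite /qf -!/(bil _ _ _) !(bilDl, bilDr, bilZl, bilZr) (bilC B y x sB); ring.
Qed.

Definition pd B := Defs.symmetric B /\ forall x, x != 0 -> 0 < qf B x.

Lemma pd_ge0 B x : pd B -> 0 <= qf B x.
Proof.
case=> _ h; have [->|/h /ltW //] := eqVneq x 0.
by rewrite qf_bil bil0l.
Qed.

Lemma CS B x y : pd B -> bil B y x ^+ 2 <= qf B y * qf B x.
Proof.
move=> pB; have [->|y0] := eqVneq y 0.
  by rewrite bil0l expr0n /= qf_bil bil0l mul0r.
have c0 := pB.2 _ y0.
rewrite (bilC B y x pB.1).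
have := pd_ge0 B (qf B y *: x + (- bil B x y) *: y) pB.
rewrite qf_lin; last by case: pB.
move=> h.
have : 0 <= qf B y * (qf B y * qf B x - bil B x y ^+ 2).
  move: h; set c := qf B y; set a := qf B x; set b := bil B x y.
  by have -> : c * (c * a - b ^+ 2) = c ^+ 2 * a + 2 * c * - b * b + (- b) ^+ 2 * c by ring.
by rewrite pmulr_rge0 // subr_ge0.
Qed.

Lemma pd_unit B : pd B -> B \in unitmx.
Proof.
move=> [sB pB]; rewrite -row_free_unit -kermx_eq0; apply/eqP/row_matrixP => i.
rewrite row0; set r := row i (kermx B).
have rB : r *m B = 0 by rewrite /r -row_mul mulmx_ker row0.
apply/eqP; apply/negPn/negP => r0.
have : r^T != 0 by rewrite -(inj_eq (@trmx_inj _ _ _)) trmxK linear0.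
move/pB; rewrite /qf.
have -> : r^T^T *m B *m r^T = 0.
  by rewrite trmxK rB mul0mx.
by rewrite mxE ltxx.
Qed.

Lemma pd_solve B b : pd B -> exists y, B *m y = b.
Proof. by move=> /pd_unit uB; exists (invmx B *m b); rewrite mulKVmx. Qed.

Lemma bil_trmx B x y : Defs.symmetric B -> bil B y x = ((B *m y)^T *m x) 0 0.
Proof. by move=> sB; rewrite /bil trmx_mul sB. Qed.

Lemma pd_strict P : pd P -> strictly_copositive P.
Proof.
move=> pP; split; first by case: pP.
have [y Py] := pd_solve P (const_mx 1) pP.
set K := qf P y + 1.
have K0 : 0 < K by rewrite /K; have := pd_ge0 P y pP; lra.
exists K^-1; first by rewrite invr_gt0.
move=> C sC hC; split => // x x0.
have eK : K^-1 * K = 1 by rewrite mulVf // gt_eqF.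
set s := \sum_i x i 0.
have hs : bil P y x = s.
  rewrite bil_trmx; last by case: pP.
  rewrite Py mxE; apply: eq_bigr => j _; by rewrite !mxE mul1r.
have cs := CS P x y pP; rewrite hs in cs.
have qx := pd_ge0 P x pP.
have hD : - (K^-1 * s ^+ 2) <= qf (C - P) x.
  rewrite qf_bil bil_sum /s expr2 mulr_suml mulr_sumr -sumrN; apply: ler_sum => i _.
  rewrite mulr_sumr mulr_sumr -sumrN; apply: ler_sum => j _.
  have := hC i j; rewrite !mxE => hij.
  have xi := x0 i; have xj := x0 j.
  have : 0 <= x i 0 * x j 0 by rewrite mulr_ge0.
  move: hij; rewrite ltr_norml => /andP [h1 h2] h3.
  nra.
have -> : C = P + (C - P) by rewrite addrC subrK.
rewrite qf_bil bilDm -!qf_bil.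
have : s ^+ 2 <= K * qf P x by rewrite /K; nra.
nra.
Qed.
End QF.
Lemma digits (M : int) d (f : nat -> int) : (forall k, `|f k| < M) ->
  \sum_(k < d) M ^+ k * f k = 0 -> forall k, (k < d)%N -> f k = 0.
Proof.
elim: d f => [//|d IH] f hf.
rewrite big_ord_recl /= expr0 mul1r.
under eq_bigr do rewrite exprS -mulrA.
rewrite -mulr_sumr => h.
set S := \sum_(i < d) _ in h.
have S0 : S = 0.
  apply/eqP; apply/negPn/negP => nS.
  have : `|f 0%N| = M * `|S|.
    have -> : f 0%N = - (M * S) by apply/eqP; rewrite -addr_eq0 h.
    rewrite normrN normrM ger0_norm //.
    by have := hf 0%N; move=> /(le_lt_trans (normr_ge0 _)) /ltW.
  have := hf 0%N.
  have M0 : 0 < M by have := hf 0%N; apply: le_lt_trans.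
  have S1 : 1 <= `|S| by rewrite -gtz0_ge1 normr_gt0.
  nia.
have f0 : f 0%N = 0 by move: h; rewrite S0 mulr0 addr0.
case=> [//|k] hk.
by apply: (IH (fun k => f k.+1)) => //.
Qed.

Lemma int_le_sq (k : int) : `|k| <= k ^+ 2.
Proof.
have e : k ^+ 2 = `|k| ^+ 2 by rewrite -normrX ger0_norm // sqr_ge0.
rewrite e; have a0 : 0 <= `|k| by exact: normr_ge0.
move: a0; set a := `|k| => a0.
case: (ltrP a 1) => h; last by nia.
have -> : a = 0 by lia.
by rewrite expr0n.
Qed.
Lemma rank1_inv (R : comNzRingType) m (a b : 'cV[R]_m) : b^T *m a = 0 ->
  (1%:M + a *m b^T) *m (1%:M - a *m b^T) = 1%:M.
Proof.
move=> ba.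
rewrite mulmxDl mul1mx mulmxBr mulmx1 -!mulmxA (mulmxA b^T) ba mul0mx mulmx0.
by rewrite subr0 subrK.

Qed.

Section Cons.
Variables (n' : nat) (Bd N : int).
Local Notation n := n'.+1.
Definition e0 : 'cV[int]_n := delta_mx 0 0.
Definition fv : 'cV[int]_n := const_mx 1 - e0.
Definition wv : 'cV[int]_n := \col_j (Bd ^+ j).
Definition uv : 'cV[int]_n := wv - e0.
Definition Am : 'M[int]_n := 1%:M + (N *: fv) *m e0^T.
Definition Ainv : 'M[int]_n := 1%:M - (N *: fv) *m e0^T.
Definition Bm : 'M[int]_n := 1%:M + e0 *m uv^T.
Definition Binv : 'M[int]_n := 1%:M - e0 *m uv^T.
Definition Vm := Am *m Bm.
Definition Um := Binv *m Ainv.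

Lemma e0T_mul (x : 'cV[int]_n) : e0^T *m x = (x 0 0)%:M.
Proof.
apply/matrixP => i j; rewrite !ord1 /e0 trmx_delta -rowE !mxE /=.
by [].

Qed.

Lemma Am_inv : Am *m Ainv = 1%:M.
Proof.
apply: rank1_inv; rewrite e0T_mul !mxE /=.
rewrite mulr1n subrr mulr0; apply/matrixP=> i j; by rewrite !mxE mul0rn.
Qed.

Lemma Bm_inv : Bm *m Binv = 1%:M.
Proof.
apply: rank1_inv.
apply/matrixP => i j; rewrite !ord1 /e0 -colE !mxE /= expr0 mulr1n.
by rewrite subrr.
Qed.

Lemma VU : Vm *m Um = 1%:M.
Proof. by rewrite /Vm /Um mulmxA -(mulmxA Am) Bm_inv mulmx1 Am_inv. Qed.

Lemma UV : Um *m Vm = 1%:M.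
Proof. exact: mulmx1C VU. Qed.

Lemma Vm_entry (v : 'cV[int]_n) i :
  (Vm *m v) i 0 = if i == 0 then \sum_(j < n) Bd ^+ j * v j 0
                  else v i 0 + N * \sum_(j < n) Bd ^+ j * v j 0.
Proof.
rewrite /Vm -mulmxA /Am /Bm !mulmxDl !mul1mx -!mulmxA e0T_mul.
set t := \sum_(j < n) _.
have hu : uv^T *m v = (t - v 0 0)%:M.
  rewrite /uv linearB /= mulmxBl e0T_mul; apply/matrixP => a b.
  rewrite !ord1 !mxE /= mulr1n; congr (_ - _).
  by apply: eq_bigr => j _; rewrite !mxE.
rewrite hu !mul_mx_scalar !mxE /= eqxx /= mulr1n.
rewrite andbT; case: eqP => [->|_] /=; first by rewrite mulr1n; ring.
rewrite mulr0n; ring.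
Qed.

Lemma Vm_sign (v : 'cV[int]_n) : v != 0 -> (forall j, `|v j 0| < Bd) -> N = Bd ->
  (forall i, 0 <= (Vm *m v) i 0) \/ (forall i, (Vm *m v) i 0 <= 0).
Proof.
move=> v0 hb hN.
set t := \sum_(j < n) Bd ^+ j * v j 0.
have t0 : t != 0.
  apply/eqP => ht; move/eqP: v0; apply; apply/matrixP => j l; rewrite ord1 mxE.
  have := @digits Bd n (fun k => v (inord k) 0).
  have hf : forall k, `|v (inord k) 0| < Bd by move=> k; exact: hb.
  move=> /(_ hf).
  have -> : \sum_(k < n) Bd ^+ k * v (inord k) 0 = t.
    by apply: eq_bigr => i _; rewrite inord_val.
  by move=> /(_ ht j (ltn_ord j)); rewrite inord_val.
have [tp|tn] : 1 <= t \/ t <= -1 by lia.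
  left => i; rewrite Vm_entry -/t; case: eqP => _; first by lia.
  have := hb i; rewrite hN; nia.
right => i; rewrite Vm_entry -/t; case: eqP => _; first by lia.
have := hb i; rewrite hN; nia.
Qed.
End Cons.

Section Main.
Variables (R : realType) (n : nat).

Lemma intmxM (A B : 'M[int]_n) : intmx R (A *m B) = intmx R A *m intmx R B.
Proof. by rewrite /intmx map_mxM. Qed.
Lemma intmx1 : intmx R (1%:M : 'M[int]_n) = 1%:M.
Proof. by rewrite /intmx map_mx1. Qed.
Lemma zvecM (A : 'M[int]_n) z : zvec R (A *m z) = intmx R A *m zvec R z.
Proof. by rewrite /intmx /zvec map_mxM. Qed.
Lemma nvecE (z : 'cV[nat]_n) : nvec R z = zvec R (map_mx Posz z).
Proof. by apply/matrixP => i j; rewrite !mxE. Qed.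
Lemma zvec_eq0 (z : 'cV[int]_n) : zvec R z = 0 -> z = 0.
Proof.
move/matrixP => h; apply/matrixP => i j; have := h i j; rewrite !mxE.
by move/eqP; rewrite intr_eq0 => /eqP.
Qed.
Lemma qf_conj (A B : 'M[R]_n) x : qf (A^T *m B *m A) x = qf B (A *m x).
Proof. by rewrite /qf trmx_mul !mulmxA. Qed.
Lemma qfN (B : 'M[R]_n) x : qf B (- x) = qf B x.
Proof. by rewrite -scaleN1r !qf_bil bilZl bilZr; ring. Qed.
End Main.

Lemma qf0 (R : realType) n (B : 'M[R]_n) : qf B 0 = 0.
Proof. by rewrite qf_bil bil0l. Qed.

Theorem theorem6p1 (R : realType) (n : nat) (Q : 'M[R]_n) :
  classically_perfect Q ->
  exists2 U : 'M[int]_n, U \in unitmx &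
    perfect_copositive ((intmx R U)^T *m Q *m intmx R U).
Proof.
case: n Q => [|n'] Q [pQ perf].
  exists 1%:M; first exact: unitmx1.
  split.
    apply: pd_strict; split; first by rewrite /Defs.symmetric !thinmx0.
    move=> x; have -> : x = 0 by apply/matrixP => -[i hi]; exfalso; by rewrite ltn0 in hi.
    by rewrite eqxx.
  by move=> Q' _ _; rewrite !thinmx0.
have pQ' : pd Q := pQ.
set m := minQ Q.
have hlb : has_lbound [set qf Q (zvec R z) | z in [set z | z != 0]].
  by exists 0 => _ [z _ <-]; exact: pd_ge0.
have mle : forall z, z != 0 -> m <= qf Q (zvec R z).
  by move=> z hz; apply: (ge_inf hlb); exists z.
have [z0 [Mz0 z0n]] : exists z, MinQ Q z /\ z != 0.
  case: (pselect (exists z, MinQ Q z /\ z != 0)) => // hN; exfalso.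
  have e2 : (2%:R : R) *: Q = Q.
    apply: perf.
      by rewrite /Defs.symmetric linearZ /= pQ.1.
    move=> z Mz.
    have z0 : z = 0 by apply/eqP; apply/negPn/negP => nz; apply: hN; exists z.
    subst z; move: Mz; rewrite /MinQ /= => <-.
    have -> : zvec R (0 : 'cV[int]_n'.+1) = 0 by apply/matrixP => i j; rewrite !mxE.
    by rewrite !qf0.
  have Q0 : Q = 0.
    have h1 : ((2%:R : R) - 1) *: Q = 0 by rewrite scalerBl e2 scale1r subrr.
    have h2 : ((2%:R : R) - 1) = 1 by ring.
    by rewrite h2 scale1r in h1.
  have d0 : (delta_mx 0 0 : 'cV[R]_n'.+1) != 0.
    by apply/eqP => /matrixP /(_ 0 0); rewrite !mxE eqxx /= => /eqP; rewrite oner_eq0.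
  have := pQ.2 _ d0; rewrite Q0 /qf mulmx0 mul0mx mxE ltxx //.
have zv0 : zvec R z0 != 0 by apply/eqP => /zvec_eq0 /eqP; rewrite (negPf z0n).
have Mz0' : qf Q (zvec R z0) = m := Mz0.
have mpos : 0 < m by rewrite -Mz0'; exact: pQ.2.
have Mnz : forall z, MinQ Q z -> z != 0.
  move=> z Mz; apply/eqP => ez; subst z; move: Mz; rewrite /MinQ /=.
  have -> : zvec R (0 : 'cV[int]_n'.+1) = 0 by apply/matrixP => i j; rewrite !mxE.
  by rewrite qf0 -/m => m0; rewrite -m0 ltxx in mpos.
have uQ := pd_unit Q pQ'.
pose y : 'I_n'.+1 -> 'cV[R]_n'.+1 := fun i => invmx Q *m delta_mx i 0.
have hy : forall i x, bil Q (y i) x = x i 0.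
  move=> i x; rewrite bil_trmx; last exact: pQ.1.
  by rewrite /y (mulKVmx uQ) trmx_delta -rowE !mxE.
set Kb := \sum_i qf Q (y i) * m.
have Kb0 : 0 <= Kb by apply: sumr_ge0 => i _; rewrite mulr_ge0 // ?pd_ge0 // ltW.
have hK : forall z, MinQ Q z -> forall i, (zvec R z i 0) ^+ 2 <= Kb.
  move=> z Mz i; have := CS Q (zvec R z) (y i) pQ'; rewrite hy.
  rewrite (Mz : qf _ _ = m) => h; apply: le_trans h _.
  rewrite /Kb (bigD1 i) //= lerDl; apply: sumr_ge0 => j _.
  by rewrite mulr_ge0 // ?pd_ge0 // ltW.
set Bn := Num.Def.archi_bound Kb.
have hB := archi_boundP Kb0.
set Bd : int := Bn%:Z.
have hb : forall z, MinQ Q z -> forall j, `|z j 0| < Bd.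
  move=> z Mz j; have := hK z Mz j; rewrite mxE => h.
  rewrite -(ltr_int R).
  have : (`|z j 0| : int)%:~R <= ((z j 0)^+2)%:~R :> R by rewrite ler_int int_le_sq.
  rewrite rmorphXn /= => h2.
  exact: (le_lt_trans h2 (le_lt_trans h hB)).
set Vi := Vm n' Bd Bd; set Ui := Um n' Bd Bd.
exists Ui; first exact: (mulmx1_unit (UV n' Bd Bd)).1.
set UR := intmx R Ui; set VR := intmx R Vi.
have hVU : VR *m UR = 1%:M by rewrite /VR /UR -intmxM VU intmx1.
have hUV : UR *m VR = 1%:M by rewrite /VR /UR -intmxM UV intmx1.
set P := UR^T *m Q *m UR.
have pP : pd P.
  split; first by rewrite /Defs.symmetric /P !trmx_mul trmxK pQ.1 mulmxA.
  move=> x x0; rewrite /P qf_conj; apply: pQ.2; apply/eqP => h; move/eqP: x0; apply.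
  by rewrite -(mul1mx x) -hVU -mulmxA h mulmx0.
have sgn : forall v, MinQ Q v ->
    (nvec R (map_mx absz (Vi *m v)) = zvec R (Vi *m v)) \/
    (nvec R (map_mx absz (Vi *m v)) = - zvec R (Vi *m v)).
  move=> v Mv; case: (Vm_sign n' Bd Bd v (Mnz v Mv) (hb v Mv) erefl) => h; [left|right];
    apply/matrixP => i j; rewrite !ord1 !mxE natr_absz.
    by have := h i; rewrite mxE => hi; rewrite ger0_norm.
  by have := h i; rewrite mxE => hi; rewrite ler0_norm // mulrNz.
have qfV : forall B v, MinQ Q v ->
    qf B (nvec R (map_mx absz (Vi *m v))) = qf B (zvec R (Vi *m v)).
  by move=> B v Mv; case: (sgn v Mv) => ->; rewrite ?qfN.
have qPV : forall v, MinQ Q v -> qf P (zvec R (Vi *m v)) = m.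
  move=> v Mv; rewrite /P qf_conj /UR -zvecM mulmxA UV mul1mx; exact: Mv.
have nzV : forall v, MinQ Q v -> map_mx absz (Vi *m v) != 0.
  move=> v Mv; apply/eqP => h.
  have h0 : zvec R (Vi *m v) = 0.
    have hn : nvec R (map_mx absz (Vi *m v)) = 0 by rewrite h; apply/matrixP => i j; rewrite !mxE.
    by case: (sgn v Mv) => e; move: hn; rewrite e // => /eqP; rewrite oppr_eq0 => /eqP.
  move/zvec_eq0: h0 => h0; move/eqP: (Mnz v Mv); apply.
  by rewrite -(mul1mx v) -(UV n' Bd Bd) -mulmxA -/Vi h0 mulmx0.
have hC : minCOP P = m.
  set E := ([set qf P (nvec R z) | z in [set z : 'cV[nat]_n'.+1 | z != 0]])%classic.
  have -> : minCOP P = inf E by [].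
  have lbE : lbound E m.
    move=> _ [z zn <-]; rewrite nvecE /P qf_conj /UR -zvecM; apply: mle.
    apply/eqP => h; move/eqP: zn; apply.
    have hz : map_mx Posz z = 0.
      by rewrite -(mul1mx (map_mx Posz z)) -(VU n' Bd Bd) -mulmxA -/Ui h mulmx0.
    apply/matrixP => i j; move/matrixP: hz => /(_ i j); rewrite !mxE.
    by case.
  have Ez : E m.
    by exists (map_mx absz (Vi *m z0)); [exact: nzV | rewrite qfV // qPV].
  apply/eqP; rewrite eq_le; apply/andP; split.
    exact: (ge_inf (ex_intro _ m lbE) Ez).
  by apply: lb_le_inf; [exists m | exact: lbE].
split; first exact: pd_strict P pP.
move=> Q2 sQ2 H2.
have sQ' : Defs.symmetric (VR^T *m Q2 *m VR).
  by rewrite /Defs.symmetric !trmx_mul trmxK sQ2 mulmxA.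
have e : VR^T *m Q2 *m VR = Q.
  apply: perf sQ' _ => v Mv.
  rewrite qf_conj /VR -zvecM -(qfV Q2 v Mv) H2 ?hC //.
  by rewrite /MinCOP /= hC qfV // qPV.
rewrite /P -e !mulmxA -trmx_mul hVU trmx1 mul1mx -mulmxA hVU mulmx1 //.
Qed.
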